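(* Let $t$ be a positive integer. For every finite chordal trigraph $H$ whose total graph $\mathcal T(H)$ has clique number at most $t+1$ and whose real graph is triangle-free, every set $X\subseteq V(G'_t)$ such that $G'_t[X]$ is $H$-free, and every $u\in V(G'_t)$, there exists a downward path $P_u$ from $u$ in $T'_t$ with $|V(P_u)\cap X|\le|V(H)|-1$.
   Context: A trigraph is $(V,E_B,E_R)$ with disjoint sets $E_B$ (black edges) and $E_R$ (red edges); adjacency type of a pair is black, red or non-edge. Total graph: $(V,E_B\cup E_R)$; real graph: $(V,E_B)$; chordal if the total graph is chordal. $G[X]$ denotes the induced subtrigraph; $G$ is $H$-free if no induced subtrigraph of $G$ is isomorphic to $H$ (isomorphism preserving adjacency types). Construction of $G'_t$, $T'_t$: a countably infinite trigraph $G'_t$ and rooted tree $T'_t$ on the same vertex set, partitioned into finite layers $L_0,L_1,\dots$ each inducing a left-to-right path of black edges. $L_0$ is a single vertex, the root. With $L_{\le i}=L_0\cup\dots\cup L_i$, layer $L_{i+1}$ is built (starting empty) as follows: for each $u\in L_i$ from left to right, let $N^\uparrow[u]:=(N_{\mathcal T(G'_t)}(u)\cap L_{\le i-1})\cup\{u\}$ and let $\mathcal B$ be the set of subsets of $N^\uparrow[u]$ all of whose pairs are red edges. For every ordered pair $(B,R)$ of disjoint subsets of $N^\uparrow[u]$ with $B\in\mathcal B$ and $|B\cup R|\le t$: append a new vertex $v_{B,R}$ at the right end of $L_{i+1}$ (black edge to the previously rightmost vertex of $L_{i+1}$, if any), make it a child of $u$, add black edges from $v_{B,R}$ to all of $B$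 and red edges to all of $R$; then append another new vertex $v'_{B,R}$ at the right end of $L_{i+1}$ (black edge to the previously rightmost vertex) and make it a child of $u$, with no further edges. A downward path from $u$ in $T'_t$ is an infinite path $u_1u_2\dots$ in $T'_t$ with $u_1=u$ and each $u_i$ ($i>1$) a child of $u_{i-1}$. *)

(* Defs.v *)
From mathcomp Require Import all_boot.
Set Implicit Arguments. Unset Strict Implicit. Unset Printing Implicit Defensive.

Record trigraph := Trigraph {
  tvert :> finType;
  tblack : rel tvert;
  tred : rel tvert;
  tblack_sym : symmetric tblack;
  tred_sym : symmetric tred;
  tblack_irr : irreflexive tblack;
  tred_irr : irreflexive tred;
  tdisj : forall x y, tblack x y -> ~~ tred x y }.

Inductive adjtype := ANone | ABlack | ARed.
Definition atype {T} (b r : rel T) x y :=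
  if b x y then ABlack else if r x y then ARed else ANone.

Definition htotal (H : trigraph) : rel H := fun x y => tblack x y || tred x y.

(** A cycle is a duplicate-free sequence [x0 :: s'] of vertices with
    consecutive (cyclically) vertices adjacent; a chord is an edge between
    two cyclically non-consecutive positions. *)
Definition chordal (H : trigraph) : Prop :=
  forall (x0 : H) (s' : seq H), let s := x0 :: s' in
  4 <= size s -> uniq s -> cycle (@htotal H) s ->
  exists i j, [/\ i < size s, j < size s, i != j,
     (j != (i.+1 %% size s)) && (i != (j.+1 %% size s))
   & @htotal H (nth x0 s i) (nth x0 s j)].

Definition clique_num_le (H : trigraph) (k : nat) : Prop :=
  forall S : {set H}, {in S &, forall x y, x != y -> @htotal H x y} -> #|S| <= k.

Definition real_triangle_free (H : trigraph) : Prop :=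
  forall x y z : H, ~ [/\ tblack x y, tblack y z & tblack x z].

(** A vertex is a pair (i, k): the k-th vertex (from the left, 0-based) of layer L_i. *)
Definition vert := (nat * nat)%type.
(** The record of a vertex: (index of its parent in the previous layer,
    B = vertices joined by black edges upward, R = vertices joined by red edges upward). *)
Definition vrec := (nat * seq vert * seq vert)%type.
Definition root_rec : vrec := (0, [::], [::]).
Definition recPar (r : vrec) : nat := r.1.1.
Definition recB (r : vrec) : seq vert := r.1.2.
Definition recR (r : vrec) : seq vert := r.2.

(** [Ls] is a list of constructed layers L_0, ..., L_m. *)
Definition recL (Ls : seq (seq vrec)) (v : vert) : vrec := nth root_rec (nth [::] Ls v.1) v.2.
Definition validL (Ls : seq (seq vrec)) (v : vert) : bool := v.2 < size (nth [::] Ls v.1).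
Definition blackL (Ls : seq (seq vrec)) (x y : vert) : bool :=
  [&& validL Ls x, validL Ls y &
   [|| (x.1 == y.1) && ((x.2.+1 == y.2) || (y.2.+1 == x.2)),
       y \in recB (recL Ls x) | x \in recB (recL Ls y)]].
Definition redL (Ls : seq (seq vrec)) (x y : vert) : bool :=
  [&& validL Ls x, validL Ls y &
   (y \in recR (recL Ls x)) || (x \in recR (recL Ls y))].
Definition tadjL (Ls : seq (seq vrec)) (x y : vert) : bool := blackL Ls x y || redL Ls x y.

Definition verts_lt (Ls : seq (seq vrec)) (i : nat) : seq vert :=
  flatten [seq [seq (j, k) | k <- iota 0 (size (nth [::] Ls j))] | j <- iota 0 i].

Definition Nup (Ls : seq (seq vrec)) (u : vert) : seq vert :=
  rcons [seq w <- verts_lt Ls u.1 | tadjL Ls u w] u.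

Fixpoint splits3 (s : seq vert) : seq (seq vert * seq vert) :=
  match s with
  | [::] => [:: ([::], [::])]
  | x :: s' => let r := splits3 s' in
      r ++ [seq (x :: p.1, p.2) | p <- r] ++ [seq (p.1, x :: p.2) | p <- r]
  end.

Definition pairsL (t : nat) (Ls : seq (seq vrec)) (u : vert) : seq (seq vert * seq vert) :=
  [seq p <- splits3 (Nup Ls u) | pairwise (redL Ls) p.1 & size p.1 + size p.2 <= t].

(** The paper does not fix the order in which the pairs (B,R) are processed;
    it is a parameter [ord], required to be a permutation (see [valid_order]). *)
Definition order_fn := vert -> seq (seq vert * seq vert) -> seq (seq vert * seq vert).
Definition valid_order (ord : order_fn) : Prop := forall u s, perm_eq (ord u s) s.

Definition next_layer (ord : order_fn) (t : nat) (Ls : seq (seq vrec)) (i : nat) : seq vrec :=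
  flatten [seq flatten [seq [:: (k, p.1, p.2); (k, [::], [::])]
                       | p <- ord (i, k) (pairsL t (Ls : seq (seq vrec)) (i, k))]
          | k <- iota 0 (size (nth [::] Ls i))].

Fixpoint layers (ord : order_fn) (t : nat) (n : nat) : seq (seq vrec) :=
  match n with
  | 0 => [:: [:: root_rec]]
  | n'.+1 => let Ls := layers ord t n' in rcons (Ls : seq (seq vrec)) (next_layer ord t Ls n')
  end.

Definition Gvert ord t (v : vert) : bool := validL (layers ord t v.1) v.
Definition Gblack ord t (x y : vert) : bool := blackL (layers ord t (maxn x.1 y.1)) x y.
Definition Gred ord t (x y : vert) : bool := redL (layers ord t (maxn x.1 y.1)) x y.

Definition Gchild ord t (v u : vert) : bool :=
  [&& Gvert ord t v, v.1 == u.1.+1 & recPar (recL (layers ord t v.1) v) == u.2].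

Definition downward_path ord t (u : vert) (p : nat -> vert) : Prop :=
  p 0 = u /\ forall n, Gchild ord t (p n.+1) (p n).

Definition Hfree_in ord t (H : trigraph) (X : vert -> Prop) : Prop :=
  ~ exists f : H -> vert, [/\ injective f, forall x, X (f x) &
      forall x y : H, x != y ->
        atype (@tblack H) (@tred H) x y = atype (Gblack ord t) (Gred ord t) (f x) (f y)].

(* Main.v *)
Require Import Defs.
From mathcomp Require Import all_boot zify.
From Stdlib Require Import Classical_Prop.
Set Implicit Arguments. Unset Strict Implicit. Unset Printing Implicit Defensive.

Module A.

Section Layers.
Variable ord : order_fn.
Variable t : nat.
Hypothesis Hord : valid_order ord.

Lemma size_layers n : size (layers ord t n) = n.+1.
Proof. by elim: n => //= n IH; rewrite size_rcons IH. Qed.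

Lemma nth_layers n m j : j <= n -> n <= m ->
  nth [::] (layers ord t m) j = nth [::] (layers ord t n) j.
Proof.
move=> hj; elim: m => [|m IH]; first by rewrite leqn0 => /eqP ->.
rewrite leq_eqVlt => /orP [/eqP <- //|hm].
rewrite /= nth_rcons size_layers ifT; last by lia.
by apply: IH.
Qed.

Definition L j := nth [::] (layers ord t j) j.

Lemma nth_layersL m j : j <= m -> nth [::] (layers ord t m) j = L j.
Proof. by move=> h; rewrite (nth_layers (n := j)). Qed.

Lemma nth_layers_big m j : m < j -> nth [::] (layers ord t m) j = [::].
Proof. by move=> h; rewrite nth_default // size_layers. Qed.

Lemma L_succ i : L i.+1 = next_layer ord t (layers ord t i) i.
Proof. by rewrite /L /= nth_rcons size_layers ltnn eqxx. Qed.

Lemma L0 : L 0 = [:: root_rec].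
Proof. by []. Qed.

Definition valid (v : vert) := v.2 < size (L v.1).
Definition grec (v : vert) := nth root_rec (L v.1) v.2.

Lemma validL_layers M v : v.1 <= M -> validL (layers ord t M) v = valid v.
Proof. by move=> h; rewrite /validL /valid nth_layersL. Qed.

Lemma recL_layers M v : v.1 <= M -> recL (layers ord t M) v = grec v.
Proof. by move=> h; rewrite /recL /grec nth_layersL. Qed.

Definition gblack (x y : vert) : bool :=
  [&& valid x, valid y &
   [|| (x.1 == y.1) && ((x.2.+1 == y.2) || (y.2.+1 == x.2)),
       y \in recB (grec x) | x \in recB (grec y)]].
Definition gred (x y : vert) : bool :=
  [&& valid x, valid y &
   (y \in recR (grec x)) || (x \in recR (grec y))].

Lemma blackL_layers M x y : x.1 <= M -> y.1 <= M -> blackL (layers ord t M) x y = gblack x y.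
Proof. by move=> hx hy; rewrite /blackL /gblack !validL_layers // !recL_layers. Qed.

Lemma redL_layers M x y : x.1 <= M -> y.1 <= M -> redL (layers ord t M) x y = gred x y.
Proof. by move=> hx hy; rewrite /redL /gred !validL_layers // !recL_layers. Qed.

Lemma GblackE x y : Gblack ord t x y = gblack x y.
Proof. by rewrite /Gblack blackL_layers // ?leq_maxl ?leq_maxr. Qed.

Lemma GredE x y : Gred ord t x y = gred x y.
Proof. by rewrite /Gred redL_layers // ?leq_maxl ?leq_maxr. Qed.

Lemma GvertE v : Gvert ord t v = valid v.
Proof. by []. Qed.

Definition KP i := flatten [seq [seq (k, p) | p <- ord (i, k) (pairsL t (layers ord t i) (i, k))]
                           | k <- iota 0 (size (L i))].

Lemma flatten_flatten_map (A B C : Type) (F : A -> B -> seq C) (G : A -> seq B) (ks : seq A) :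
  flatten [seq flatten [seq F k p | p <- G k] | k <- ks] =
  flatten [seq F kp.1 kp.2 | kp <- flatten [seq [seq (k, p) | p <- G k] | k <- ks]].
Proof.
elim: ks => //= k ks IH; rewrite map_cat flatten_cat IH; congr (_ ++ _).
by rewrite -map_comp.
Qed.

Lemma next_layer_KP i : next_layer ord t (layers ord t i) i =
  flatten [seq [:: (kp.1, kp.2.1, kp.2.2); (kp.1, [::], [::])] | kp <- KP i].
Proof.
rewrite /next_layer /KP.
rewrite (nth_layersL (m := i)) //.
by rewrite (flatten_flatten_map (fun k p => [:: (k, p.1, p.2); (k, [::], [::])])).
Qed.

Lemma nth_flat2 (A B : Type) (f g : A -> B) (s : seq A) (a0 : A) (b0 : B) m :
  m < 2 * size s ->
  nth b0 (flatten [seq [:: f x; g x] | x <- s]) m =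
  if odd m then g (nth a0 s m./2) else f (nth a0 s m./2).
Proof.
elim: s m => [|x s IH] m; first by rewrite muln0.
case: m => [|[|m]] //= hm.
rewrite IH; last by lia.
by rewrite negbK; case: (odd m).
Qed.

Lemma size_flat2 (A B : Type) (f g : A -> B) (s : seq A) :
  size (flatten [seq [:: f x; g x] | x <- s]) = 2 * size s.
Proof. elim: s => //= x s IH; rewrite IH; lia. Qed.


Lemma mem_splits3 (s : seq vert) p : p \in splits3 s ->
  {subset p.1 <= s} /\ {subset p.2 <= s}.
Proof.
elim: s p => [|x s IH] p /=; first by rewrite inE => /eqP ->; split => y.
rewrite !mem_cat => /orP [/IH [h1 h2]|/orP [/mapP [q /IH [h1 h2] ->]|/mapP [q /IH [h1 h2] ->]]] /=.
- by split=> y hy; rewrite inE; apply/orP; right; [apply: h1|apply: h2].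
- split=> y; rewrite ?inE; last by move=> hy; apply/orP; right; apply: h2.
  by case/orP => [->//|hy]; apply/orP; right; apply: h1.
- split=> y; rewrite ?inE; first by move=> hy; apply/orP; right; apply: h1.
  by case/orP => [->//|hy]; apply/orP; right; apply: h2.
Qed.

Lemma splits3_filter (PB PR : pred vert) (s : seq vert) :
  (forall x, PB x -> ~~ PR x) -> (filter PB s, filter PR s) \in splits3 s.
Proof.
move=> hd; elim: s => [|x s IH] /=; first by rewrite inE.
rewrite !mem_cat; case hB: (PB x); case hR: (PR x).
- by move: (hd x hB); rewrite hR.
- by rewrite (map_f (fun p => (x :: p.1, p.2)) IH) orbT.
- by rewrite (map_f (fun p => (p.1, x :: p.2)) IH) !orbT.
- by rewrite IH.
Qed.

Lemma mem_verts_lt Ls i (y : vert) : (y \in verts_lt Ls i) = (y.1 < i) && (y.2 < size (nth [::] Ls y.1)).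
Proof.
case: y => a b /=; apply/idP/idP.
- move/flattenP => [s /mapP [j hj ->] /mapP [k hk [-> ->]]].
  by rewrite mem_iota in hj; rewrite mem_iota in hk; apply/andP; split; lia.
- move=> /andP [ha hb]; apply/flattenP; exists [seq (a, k) | k <- iota 0 (size (nth [::] Ls a))].
  + by apply/mapP; exists a => //; rewrite mem_iota.
  + by apply/mapP; exists b => //; rewrite mem_iota.
Qed.

Lemma mem_Nup i k (y : vert) : y \in Nup (layers ord t i) (i, k) -> y = (i, k) \/ (y.1 < i /\ valid y).
Proof.
rewrite /Nup mem_rcons inE => /orP [/eqP -> | ]; first by left.
rewrite mem_filter => /andP [_]; rewrite mem_verts_lt => /andP [h1 h2]; right; split => //.
by rewrite /valid -(nth_layersL (m := i)) // ltnW.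
Qed.

Lemma Nup_self v : v \in Nup (layers ord t v.1) v.
Proof. by rewrite /Nup mem_rcons inE eqxx. Qed.

Lemma mem_KP i kp : (kp \in KP i) = (kp.1 < size (L i)) && (kp.2 \in pairsL t (layers ord t i) (i, kp.1)).
Proof.
case: kp => k p /=; apply/idP/idP.
- move/flattenP => [s /mapP [j hj ->] /mapP [q hq [-> ->]]].
  rewrite mem_iota in hj; rewrite (perm_mem (Hord (i, j) _)) in hq.
  by rewrite hq andbT; lia.
- move=> /andP [hk hp]; apply/flattenP; eexists.
  + by apply/mapP; exists k => //; rewrite mem_iota.
  + by apply/mapP; exists p => //; rewrite (perm_mem (Hord (i, k) _)).
Qed.

Lemma pairsL_mem Ls u p : p \in pairsL t Ls u ->
  [/\ p \in splits3 (Nup Ls u), pairwise (redL Ls) p.1 & size p.1 + size p.2 <= t].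
Proof. by rewrite mem_filter => /andP [/andP [h1 h2] h3]. Qed.

Lemma rec_elems (v y : vert) : (y \in recB (grec v)) || (y \in recR (grec v)) -> y.1 < v.1 /\ valid y.
Proof.
case: v => i k; rewrite /grec /=.
case: i => [|i].
  by rewrite L0; case: k => [|k] //=; rewrite nth_nil.
case: (ltnP k (size (L i.+1))) => hk; last by rewrite nth_default.
have hs := hk; rewrite L_succ next_layer_KP size_flat2 in hs.
rewrite L_succ next_layer_KP (nth_flat2 _ _ (0, ([::], [::]))) //.
set kp := nth _ _ _.
have : kp \in KP i by apply: mem_nth; rewrite ltn_half_double -mul2n.
rewrite mem_KP => /andP [hk1 /pairsL_mem [hsp _ _]].
have [s1 s2] := mem_splits3 hsp.
case: (odd k) => //= /orP [/s1|/s2] /mem_Nup [-> | [h1 h2]] //;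
  by split => //; apply: ltnW.
Qed.

Definition child (d : vert) (p : seq vert * seq vert) : vert :=
  (d.1.+1, 2 * index (d.2, p) (KP d.1)).

Lemma child_spec d p : valid d -> p \in pairsL t (layers ord t d.1) d ->
  [/\ valid (child d p), grec (child d p) = (d.2, p.1, p.2), ~~ odd (child d p).2
    & (child d p).1 = d.1.+1].
Proof.
case: d => i k /= hv hp.
have hin : (k, p) \in KP i by rewrite mem_KP /=; apply/andP; split.
have hidx : index (k, p) (KP i) < size (KP i) by rewrite index_mem.
rewrite /child /valid /grec /= L_succ next_layer_KP size_flat2.
split.
- by rewrite ltn_pmul2l.
- by rewrite (nth_flat2 _ _ (0, ([::], [::]))) ?ltn_pmul2l // oddM /= mul2n doubleK nth_index.
- by rewrite oddM.
- by [].
Qed.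


Lemma uniq_verts_lt Ls i : uniq (verts_lt Ls i).
Proof.
elim: i => [|i IH] //.
rewrite /verts_lt -addn1 iotaD map_cat flatten_cat /= cats0 cat_uniq -/(verts_lt Ls i) IH /=.
rewrite map_inj_uniq ?iota_uniq; last by move=> a b [].
rewrite andbT; apply/hasPn => y /mapP [k _ ->]; rewrite mem_verts_lt /= ltnn //.
Qed.

Lemma uniq_Nup i k : uniq (Nup (layers ord t i) (i, k)).
Proof.
rewrite /Nup rcons_uniq filter_uniq ?uniq_verts_lt // andbT mem_filter mem_verts_lt /= ltnn.
by rewrite andbF.
Qed.

Definition par (v : vert) : vert := (v.1.-1, recPar (grec v)).
Definition anc (l : nat) (v : vert) : vert := iter (v.1 - l) par v.

Lemma iter_par_layer n v : (iter n par v).1 = v.1 - n.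
Proof. by elim: n => [|n IH] /=; [rewrite subn0 | rewrite IH; lia]. Qed.

Lemma anc_layer l v : l <= v.1 -> (anc l v).1 = l.
Proof. by move=> h; rewrite /anc iter_par_layer; lia. Qed.

Lemma anc_self v : anc v.1 v = v.
Proof. by rewrite /anc subnn. Qed.

Lemma anc_anc l l' v : l <= l' -> l' <= v.1 -> anc l (anc l' v) = anc l v.
Proof.
move=> h1 h2; rewrite {1}/anc anc_layer // /anc -iterD.
by congr iter; lia.
Qed.

Lemma GchildE c d : Gchild ord t c d = [&& valid c, c.1 == d.1.+1 & recPar (grec c) == d.2].
Proof. by []. Qed.

Lemma Gchild_par c d : Gchild ord t c d -> [/\ par c = d, c.1 = d.1.+1 & valid c].
Proof.
rewrite GchildE => /and3P [hv /eqP h1 /eqP h2]; split => //.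
by case: d h1 h2 => a b /= h1 h2; rewrite /par h1 h2.
Qed.

Lemma Gchild_anc c d : Gchild ord t c d -> anc d.1 c = d.
Proof.
move/Gchild_par => [h1 h2 _]; by rewrite /anc h2 subSnn.
Qed.

Lemma path_layer w p : downward_path ord t w p -> forall n, (p n).1 = w.1 + n.
Proof.
move=> [h0 hs]; elim => [|n IH]; first by rewrite h0 addn0.
by have [_ -> _] := Gchild_par (hs n); rewrite IH addnS.
Qed.

Lemma path_anc w p : downward_path ord t w p -> forall n m, n <= m -> anc (w.1 + n) (p m) = p n.
Proof.
move=> hp n; elim => [|m IH]; first by rewrite leqn0 => /eqP ->; rewrite -(path_layer hp) anc_self.
rewrite leq_eqVlt => /orP [/eqP <-|hm]; first by rewrite -(path_layer hp) anc_self.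
have := hp.2 m => hc.
rewrite -(anc_anc (l' := w.1 + m)) ?(path_layer hp) //; try lia.
by rewrite -(path_layer hp m) (Gchild_anc hc) IH.
Qed.

Lemma Nup_rec (c y : vert) : valid c -> (y \in recB (grec c)) || (y \in recR (grec c)) ->
  y \in Nup (layers ord t c.1) c.
Proof.
move=> hc hy; have [h1 h2] := rec_elems hy.
rewrite /Nup mem_rcons inE mem_filter mem_verts_lt h1 (nth_layersL (ltnW h1)).
rewrite (h2 : y.2 < size (L y.1)) /= orbC /=.
rewrite /tadjL blackL_layers ?(ltnW h1) // redL_layers ?(ltnW h1) //.
rewrite /gblack /gred hc h2 /=; case/orP: hy => ->; by rewrite ?orbT.
Qed.

Lemma Nup_elems (d y : vert) : valid d -> y \in Nup (layers ord t d.1) d -> y.1 <= d.1 /\ valid y.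
Proof.
case: d => i k hv /mem_Nup [-> | [h1 h2]] //; split => //; exact: ltnW.
Qed.

Section Carry.
Variables sB sR : seq vert.
Hypothesis hdisj : forall x, x \in sB -> x \notin sR.
Hypothesis hsize : size sB + size sR <= t.
Hypothesis hred : forall a b, a \in sB -> b \in sB -> a != b -> gred a b.

Definition pat (d : vert) := (filter (mem sB) (Nup (layers ord t d.1) d),
                              filter (mem sR) (Nup (layers ord t d.1) d)).

Definition cstep (d : vert) := child d (pat d).

Definition carries (d : vert) := valid d /\ {subset sB ++ sR <= Nup (layers ord t d.1) d}.

Lemma pat_pairsL d : carries d -> pat d \in pairsL t (layers ord t d.1) d.
Proof.
case: d => i k [hv hsub].
rewrite /pairsL mem_filter splits3_filter; last by move=> x; apply: hdisj.
rewrite andbT /=; apply/andP; split.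
- apply/(pairwiseP (0, 0)) => a b; rewrite !size_filter => ha hb hab.
  set s := filter _ _.
  have hu : uniq s by rewrite filter_uniq // uniq_Nup.
  have hna : nth (0,0) s a \in s by apply: mem_nth; rewrite size_filter.
  have hnb : nth (0,0) s b \in s by apply: mem_nth; rewrite size_filter.
  move: (hna) (hnb); rewrite !mem_filter => /andP [hA hA'] /andP [hB hB'].
  rewrite redL_layers; first last.
  + by have [] := Nup_elems hv hB'.
  + by have [] := Nup_elems hv hA'.
  apply: hred => //; rewrite nth_uniq ?size_filter //; lia.
- set s := Nup _ _.
  have -> : size (filter (mem sB) s) + size (filter (mem sR) s) = size (filter (predU (mem sB) (mem sR)) s).
    rewrite !size_filter -count_predUI.
    have -> : count (predI (mem sB) (mem sR)) s = 0.
      apply/eqP; rewrite eqn0Ngt -has_count; apply/hasPn => x _; rewrite /= ?inE.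
      by case hx: (x \in sB) => //=; rewrite (negbTE (hdisj hx)).
    by rewrite addn0.
  apply: leq_trans hsize; rewrite -size_cat.
  apply: uniq_leq_size; first by rewrite filter_uniq // uniq_Nup.
  by move=> x; rewrite mem_filter mem_cat => /andP [].
Qed.

Lemma cstep_spec d : carries d ->
  [/\ Gchild ord t (cstep d) d, ~~ odd (cstep d).2, recB (grec (cstep d)) =i sB,
      recR (grec (cstep d)) =i sR & carries (cstep d)].
Proof.
move=> hd; have hp := pat_pairsL hd.
have [hv hg hodd hl] := child_spec hd.1 hp.
have hB : recB (grec (cstep d)) =i sB.
  move=> x; rewrite /cstep hg /recB /= mem_filter.
  apply/andP/idP => [[]//|hx]; split => //; apply: hd.2; by rewrite mem_cat hx.
have hR : recR (grec (cstep d)) =i sR.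
  move=> x; rewrite /cstep hg /recR /= mem_filter.
  apply/andP/idP => [[]//|hx]; split => //; apply: hd.2; by rewrite mem_cat hx orbT.
split => //.
- by rewrite /cstep GchildE hv hl eqxx hg /= eqxx.
- split => // x; rewrite mem_cat -hB -hR => hx; exact: Nup_rec.
Qed.

Definition cpath (w : vert) (n : nat) := iter n cstep w.

Lemma cpath_carries w n : carries w -> carries (cpath w n).
Proof. by move=> hw; elim: n => //= n IH; have [] := cstep_spec IH. Qed.

Lemma cpath_down w : carries w -> downward_path ord t w (cpath w).
Proof. by move=> hw; split => // n; have [] := cstep_spec (cpath_carries n hw). Qed.

End Carry.


Section Hits.
Variable X : vert -> Prop.

Definition Q (w : vert) (m : nat) : Prop :=
  forall p, downward_path ord t w p ->
  exists s : seq nat, [/\ uniq s, (forall j, j \in s -> 0 < j /\ X (p j)) & m <= size s].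

Lemma Q_le w m m' : m' <= m -> Q w m -> Q w m'.
Proof.
move=> hm hq p hp; have [s [h1 h2 h3]] := hq p hp; exists s; split => //; exact: leq_trans h3.
Qed.

Lemma least_hit (c : nat -> vert) j : 0 < j -> X (c j) ->
  exists n, [/\ 0 < n, X (c n) & forall j', 0 < j' < n -> ~ X (c j')].
Proof.
elim/ltn_ind: j => j IH hj hx.
case: (classic (exists j', 0 < j' < j /\ X (c j'))).
- move=> [j' [/andP [h1 h2] h3]]; exact: IH h3.
- move=> hn; exists j; split => // j' hj' hx'; apply: hn; by exists j'.
Qed.

Definition splice (c : nat -> vert) (n : nat) (q : nat -> vert) (i : nat) : vert :=
  if i <= n then c i else q (i - n).

Lemma splice_down w c n q : downward_path ord t w c -> downward_path ord t (c n) q ->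
  downward_path ord t w (splice c n q).
Proof.
move=> [hc0 hc] [hq0 hq]; split; first by rewrite /splice leq0n.
move=> i; rewrite /splice.
case: (ltngtP i n) => h.
- exact: hc.
- rewrite (_ : i.+1 - n = (i - n).+1); last by lia.
  exact: hq.
- by rewrite h subSnn -hq0; exact: hq.
Qed.

Lemma first_hit w m (c : nat -> vert) : downward_path ord t w c -> Q w m.+1 ->
  exists n, [/\ 0 < n, X (c n), forall j, 0 < j < n -> ~ X (c j) & Q (c n) m].
Proof.
move=> hc hq.
have [s [hu hs hsz]] := hq c hc.
case: s hu hs hsz => [|j0 s] // hu hs _.
have [hj0 hx0] := hs j0 (mem_head _ _).
have [n [hn hxn hmin]] := least_hit hj0 hx0.
exists n; split => // q hqd.
have hd := splice_down hc hqd.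
have [s' [hu' hs' hsz']] := hq _ hd.
exists [seq j - n | j <- s' & n < j]; split.
- rewrite map_inj_in_uniq ?filter_uniq //.
  move=> a b; rewrite !mem_filter => /andP [ha _] /andP [hb _]; lia.
- move=> j /mapP [i]; rewrite mem_filter => /andP [hi1 hi2] ->.
  split; first lia.
  by have [_] := hs' i hi2; rewrite /splice leqNgt hi1.
- have hsplit : size s' <= size [seq j <- s' | n < j] + 1.
    rewrite -(count_predC (fun j => n < j) s') -size_filter leq_add2l.
    rewrite -size_filter; apply: (leq_trans (n := size [:: n])) => //.
    apply: uniq_leq_size; first by rewrite filter_uniq.
    move=> j; rewrite mem_filter inE /= -leqNgt => /andP [hjn hj].
    have [hj0' hxj] := hs' j hj; move: hxj; rewrite /splice hjn => hxj.
    rewrite inE; case: (ltngtP j n) => hjl //.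
    + by exfalso; apply: (hmin j) => //; rewrite hj0'.
    + lia.
  rewrite size_map; lia.
Qed.

End Hits.

End Layers.

End A.
Import A.

Module D.

Ltac clean_nat := repeat match goal with
  | h : ?T |- _ => lazymatch T with
      | is_true (leq _ _) => fail
      | @eq nat _ _ => fail
      | ~ (@eq nat _ _) => fail
      | _ => lazymatch type of T with Prop => clear h | _ => fail end end end.
Ltac nlia := clean_nat; lia.

Lemma min_ex (P : nat -> Prop) n : P n -> exists m, P m /\ forall m', m' < m -> ~ P m'.
Proof.
elim/ltn_ind: n => n IH hn.
case: (classic (exists m', m' < n /\ P m')) => [[m' [h1 h2]]|hno]; first exact: IH h2.
by exists n; split => // m' hm hp; apply: hno; exists m'.
Qed.

Lemma max_ex (P : nat -> Prop) b n : P n -> n <= b ->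
  exists m, [/\ P m, m <= b & forall m', m < m' -> m' <= b -> ~ P m'].
Proof.
move=> hn hb.
have hP : (b - n <= b) /\ P (b - (b - n)) by split; [exact: leq_subr | rewrite subKn].
have [j [[hj1 hj2] hmin]] := @min_ex (fun j => j <= b /\ P (b - j)) (b - n) hP.
exists (b - j); split => //; first exact: leq_subr.
move=> m' h1 h2 hp; apply: (hmin (b - m')); first lia.
by split; [exact: leq_subr | rewrite subKn].
Qed.

Section Chordal.
Variable H : trigraph.

Local Notation adj := (@htotal H).
Implicit Types (S K : {set H}) (a b s : H) (f g : nat -> H).

Lemma adj_sym : symmetric adj.
Proof. by move=> x y; rewrite /htotal tblack_sym tred_sym. Qed.

Lemma adj_irr : irreflexive adj.
Proof. by move=> x; rewrite /htotal tblack_irr tred_irr. Qed.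

Definition erel (S : {set H}) : rel H := fun x y => [&& x \in S, y \in S & adj x y].
Definition conn (S : {set H}) := connect (erel S).

Lemma erel_sym S : symmetric (erel S).
Proof. by move=> x y; rewrite /erel adj_sym andbCA. Qed.

Lemma conn_sym S : symmetric (conn S).
Proof. exact/sym_connect_sym/erel_sym. Qed.

Lemma conn_trans S : transitive (conn S).
Proof. exact: connect_trans. Qed.

Lemma conn_refl S a : conn S a a.
Proof. exact: connect0. Qed.

Lemma conn_in S a b : a \in S -> conn S a b -> b \in S.
Proof.
move=> ha /connectP [p hp ->]; elim: p a ha hp => //= x p IH a ha /andP [/and3P [_ hx _] hp].
exact: IH hp.
Qed.

Lemma conn_edge S a b : a \in S -> b \in S -> adj a b -> conn S a b.
Proof. by move=> ha hb hab; apply: connect1; rewrite /erel ha hb. Qed.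

Definition walk (S : {set H}) (f : nat -> H) (r : nat) :=
  (forall i, i <= r -> f i \in S) /\ (forall i, i < r -> adj (f i) (f i.+1)).

Lemma conn_walk S a b : a \in S -> conn S a b ->
  exists f r, [/\ f 0 = a, f r = b & walk S f r].
Proof.
move=> ha /connectP [p hp ->].
exists (fun i => nth a (a :: p) i), (size p); split => //.
- by rewrite (last_nth a).
- have /pathP hpp := hp; split.
  + move=> i hi; case: i hi => [|i] hi //=.
    by have := hpp a i hi; rewrite /erel => /and3P [].
  + move=> i hi; have := hpp a i hi; rewrite /erel => /and3P [_ _ h]; exact: h.
Qed.

Lemma walk_conn S f r : walk S f r -> conn S (f 0) (f r).
Proof.
move=> [h1 h2]; elim: r h1 h2 => [|r IH] h1 h2; first exact: conn_refl.
apply: conn_trans (IH _ _) _.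
- by move=> i hi; apply: h1; lia.
- by move=> i hi; apply: h2; lia.
- by apply: conn_edge; [apply: h1 | apply: h1 | apply: h2].
Qed.

Definition shortcut (f : nat -> H) (i d : nat) (l : nat) := if l <= i then f l else f (l + d).

Lemma walk_shortcut S f r i d : walk S f r -> i + d <= r ->
  (i < r - d -> adj (f i) (f (i + d).+1)) -> walk S (shortcut f i d) (r - d).
Proof.
move=> [h1 h2] hid hadj; split.
- move=> l hl; rewrite /shortcut; case: ifP => hli; apply: h1; lia.
- move=> l hl; rewrite /shortcut.
  case: ifP => ha; case: ifP => hb.
  + apply: h2; lia.
  + have -> : l = i by lia.
    by rewrite addSn; apply: hadj; lia.
  + lia.
  + by rewrite addSn; apply: h2; lia.
Qed.

Hypothesis Hch : chordal H.

Lemma no_chordless (g : nat -> H) n : 4 <= n ->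
  (forall i j, i < n -> j < n -> g i = g j -> i = j) ->
  (forall i, i.+1 < n -> adj (g i) (g i.+1)) -> adj (g n.-1) (g 0) ->
  (forall i j, i.+1 < j -> j < n -> ~ (i = 0 /\ j = n.-1) -> ~~ adj (g i) (g j)) -> False.
Proof.
move=> hn hinj hcons hlast hno.
pose s' := [seq g i | i <- iota 1 n.-1].
have hs : g 0 :: s' = [seq g i | i <- iota 0 n].
  by rewrite /s'; case: (n) hn => [|n'] //.
have hsz : size (g 0 :: s') = n by rewrite hs size_map size_iota.
have hnth : forall i, i < n -> nth (g 0) (g 0 :: s') i = g i.
  by move=> i hi; rewrite hs (nth_map 0) ?size_iota // nth_iota.
have hsz' : 4 <= size (g 0 :: s') by rewrite hsz.
have := @Hch (g 0) s' hsz'.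
case.
- rewrite hs map_inj_in_uniq ?iota_uniq //.
  by move=> a b; rewrite !mem_iota => ha hb; apply: hinj; lia.
- have hsz1 : size s' = n.-1 by rewrite size_map size_iota.
  have hs'i : forall i, i < n.-1 -> nth (g 0) s' i = g i.+1.
    by move=> i hi; rewrite (nth_map 0) ?size_iota // nth_iota // add1n.
  rewrite /cycle; apply/(pathP (g 0)) => i; rewrite size_rcons hsz1 => hi.
  have hL : nth (g 0) (g 0 :: rcons s' (g 0)) i = g i.
    case: i hi => [|i] hi //=; rewrite nth_rcons hsz1 ifT ?hs'i //; lia.
  rewrite hL nth_rcons hsz1; case: ltnP => hi'.
  + by rewrite hs'i //; apply: hcons; lia.
  + have -> : i = n.-1 by lia.
    by rewrite if_same.
- move=> i [j [hi hj hij /andP [h1 h2] hadj]].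
  rewrite hsz in hi hj h1 h2; rewrite !hnth // in hadj.
  case: (ltngtP i j) => hlt; last by move/eqP: hij.
  + have hne : j <> i.+1.
      by move=> e; move: h1; rewrite e modn_small ?eqxx //; lia.
    apply: (negP (hno i j _ hj _)) => //; first lia.
    case=> hi0 hjn; case/negP: h2; rewrite hi0 hjn prednK ?modnn //; lia.
  + have hne : i <> j.+1.
      by move=> e; move: h2; rewrite e modn_small ?eqxx //; lia.
    rewrite adj_sym in hadj.
    apply: (negP (hno j i _ hi _)) => //; first lia.
    case=> hi0 hjn; case/negP: h1; rewrite hi0 hjn prednK ?modnn //; lia.
Qed.

Lemma complete_vertex S K s :
  (forall k1 k2, k1 \in K -> k2 \in K -> k1 != k2 -> adj k1 k2) ->
  [disjoint S & K] -> s \in S ->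
  exists h, [/\ h \in S, conn S s h &
    forall k s', k \in K -> conn S s s' -> adj s' k -> adj h k].
Proof.
move=> hK hdis hs.
pose Nk x := [set k in K | adj x k].
pose C := [pred x | (x \in S) && conn S s x].
have hsC : s \in C by rewrite inE /= hs conn_refl.
have [h hC hmax] := @arg_maxnP H s C (fun x => #|Nk x|) hsC.
move/andP: hC => [hS hsh].
exists h; split => // k s' hk hss' hadj'.
apply/negPn/negP => hnk.
have hs'S : s' \in S := conn_in hs hss'.
have hhs' : conn S h s' by apply: conn_trans hss'; rewrite conn_sym.
have [f0 [r0 [hf00 hf0r hw0]]] := conn_walk hS hhs'.
pose P r := exists f, [/\ f 0 = h, walk S f r & adj (f r) k].
have hP0 : P r0 by exists f0; split => //; rewrite hf0r.
have [r [[f [hf0 hw hfr]] hmin]] := min_ex hP0.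
have hKS : forall x, x \in K -> x \notin S.
  by move=> x hx; rewrite (disjointFl hdis hx).
have hr0 : 0 < r by case: r {hmin hw} hfr => [|r] //; rewrite hf0 (negbTE hnk).
have m1 : forall i, i < r -> ~~ adj (f i) k.
  move=> i hi; apply/negP => ha; apply: (hmin i hi); exists f; split => //.
  split => [j hj|j hj]; [apply: hw.1 | apply: hw.2].
  - exact: leq_trans hj (ltnW hi).
  - exact: ltn_trans hj hi.
have m2 : forall i j, i.+1 < j -> j <= r -> ~~ adj (f i) (f j).
  move=> i j hij hjr; apply/negP => ha.
  have e1 : i + (j - i.+1) <= r by nlia.
  have e2 : (i + (j - i.+1)).+1 = j by nlia.
  have hw' := @walk_shortcut S f r i (j - i.+1) hw e1 (fun _ => ltac:(by rewrite e2)).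
  apply: (hmin (r - (j - i.+1))); first nlia.
  exists (shortcut f i (j - i.+1)); split => //.
  rewrite /shortcut ifF; last nlia.
  by rewrite subnK; [exact: hfr | nlia].
have m3 : forall i j, i < j -> j <= r -> f i <> f j.
  move=> i j hij hjr e.
  case: (ltngtP j r) => hjr'; last first.
  - by move: (m1 i (ltac:(nlia))); rewrite e hjr' hfr.
  - nlia.
  have e1 : i + (j - i) <= r by nlia.
  have e2 : i + (j - i) = j by nlia.
  have hw' := @walk_shortcut S f r i (j - i) hw e1 (fun _ => ltac:(by rewrite e2 e; apply: hw.2)).
  apply: (hmin (r - (j - i))); first nlia.
  exists (shortcut f i (j - i)); split => //.
  rewrite /shortcut ifF; last nlia.
  by rewrite subnK; [exact: hfr | nlia].
have hzS : f r \in S by apply: hw.1.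
have hzC : f r \in C.
  rewrite inE /= hzS /=; apply: conn_trans hsh _.
  by rewrite -hf0; apply: walk_conn.
have hcard : #|Nk (f r)| <= #|Nk h| := hmax _ hzC.
have [k0 hk0 hk0'] : exists2 k0, k0 \in Nk h & k0 \notin Nk (f r).
  apply/subsetPn/negP => hsub.
  have : #|Nk h| < #|Nk (f r)|.
    apply: proper_card; rewrite properE hsub /=; apply/subsetPn; exists k.
    - by rewrite inE hk hfr.
    - by rewrite inE hk (negbTE hnk).
  nlia.
move: hk0 hk0'; rewrite !inE => /andP [hk0K hhk0] hk0z.
rewrite hk0K /= in hk0z.
have h00 : adj (f 0) k0 by rewrite hf0.
have [i0 [hi0 hi0r hi0max]] := @max_ex (fun i => adj (f i) k0) r 0 h00 (leq0n _).
have hi0r' : i0 < r.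
  by rewrite ltn_neqAle hi0r andbT; apply/negP => /eqP e; rewrite e in hi0; rewrite hi0 in hk0z.
have hkk0 : k0 != k by apply/negP => /eqP e; rewrite -e hhk0 in hnk.
set Lr := r - i0.
have hLr : Lr = r - i0 by [].
pose g l := if l == 0 then k0 else if l <= Lr.+1 then f (i0 + l.-1) else k.
have gS : forall l, 0 < l -> l <= Lr.+1 -> g l = f (i0 + l.-1).
  by move=> l h1 h2; rewrite /g ifF ?ifT //; nlia.
have gk0 : g 0 = k0 by [].
have gk : g Lr.+2 = k by rewrite /g ifF ?ifF //; nlia.
have hk0S := hKS _ hk0K.
have hkS := hKS _ hk.
apply: (@no_chordless g Lr.+3).
- nlia.
- move=> a b ha hb e.
  case: (posnP a) => [a0|apos]; case: (posnP b) => [b0|bpos]; try nlia.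
  + move: e; rewrite a0 gk0.
    case: (leqP b Lr.+1) => hb1.
    * by rewrite gS // => e; move: (hw.1 (i0 + b.-1) (ltac:(nlia))); rewrite -e (negbTE hk0S).
    * have -> : b = Lr.+2 by nlia.
      by rewrite gk => e; rewrite e eqxx in hkk0.
  + move: e; rewrite b0 gk0.
    case: (leqP a Lr.+1) => ha1.
    * by rewrite gS // => e; move: (hw.1 (i0 + a.-1) (ltac:(nlia))); rewrite e (negbTE hk0S).
    * have -> : a = Lr.+2 by nlia.
      by rewrite gk => e; rewrite e eqxx in hkk0.
  + case: (leqP a Lr.+1) => ha1; case: (leqP b Lr.+1) => hb1.
    * rewrite !gS // in e.
      case: (ltngtP a b) => hab //.
      - by exfalso; apply: (m3 (i0 + a.-1) (i0 + b.-1)); [nlia | nlia | exact: e].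
      - by exfalso; apply: (m3 (i0 + b.-1) (i0 + a.-1)); [nlia | nlia | rewrite e].
    * have hb2 : b = Lr.+2 by nlia.
      rewrite gS // hb2 gk in e.
      by move: (hw.1 (i0 + a.-1) (ltac:(nlia))); rewrite e (negbTE hkS).
    * have ha2 : a = Lr.+2 by nlia.
      rewrite ha2 gk (@gS b) // in e.
      by move: (hw.1 (i0 + b.-1) (ltac:(nlia))); rewrite -e (negbTE hkS).
    * nlia.
- move=> l hl.
  case: (posnP l) => [->|lpos].
  + by rewrite gk0 gS // addn0 adj_sym.
  + case: (ltngtP l Lr.+1) => hl1; last first.
    * by rewrite hl1 gk gS //= (_ : i0 + Lr = r) ?hfr //; nlia.
    * nlia.
    * rewrite !gS //; try nlia.
      have -> : i0 + l.+1.-1 = (i0 + l.-1).+1 by nlia.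
      apply: hw.2; nlia.
- by rewrite /= gk gk0 hK // eq_sym.
- move=> a b hab hb hnot.
  case: (posnP a) => [a0|apos].
  + have hbne : b <> Lr.+2 by move=> e; apply: hnot; split.
    rewrite a0 gk0 gS; try nlia.
    by rewrite adj_sym; apply/negP => hh; apply: (hi0max (i0 + b.-1)); [nlia | nlia | exact: hh].
  + case: (leqP b Lr.+1) => hb1.
    * by rewrite !gS; try nlia; apply: m2; nlia.
    * have -> : b = Lr.+2 by nlia.
      by rewrite gk gS; try nlia; apply: m1; nlia.
Qed.

End Chordal.

End D.
Import D.

Module M.

Ltac clean_nat := repeat match goal with
  | h : ?T |- _ => lazymatch T with
      | is_true (leq _ _) => fail
      | @eq nat _ _ => fail
      | ~ (@eq nat _ _) => fail
      | _ => lazymatch type of T with Prop => clear h | _ => fail end end end.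
Ltac nlia := clean_nat; lia.

Section Main.
Variable ord : order_fn.
Variable t : nat.
Hypothesis Hord : valid_order ord.

Local Notation valid := (valid ord t).
Local Notation grec := (grec ord t).
Local Notation gblack := (gblack ord t).
Local Notation gred := (gred ord t).
Local Notation anc := (anc ord t).
Local Notation Nup' w := (Nup (layers ord t w.1) w).
Local Notation Gat := (atype gblack gred).
Local Notation inrec v x := ((v \in recB (grec x)) || (v \in recR (grec x))).

Lemma gblack_sym : symmetric gblack.
Proof.
move=> x y; rewrite /A.gblack (eq_sym x.1).
by case: (valid x); case: (valid y); case: (y.1 == x.1); case: (x.2.+1 == y.2);
  case: (y.2.+1 == x.2); case: (y \in recB (grec x)); case: (x \in recB (grec y)).
Qed.

Lemma gred_sym : symmetric gred.
Proof.
move=> x y; rewrite /A.gred.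
by case: (valid x); case: (valid y); case: (y \in recR (grec x)); case: (x \in recR (grec y)).
Qed.

Lemma atype_sym (T : Type) (b r : rel T) : symmetric b -> symmetric r ->
  forall x y, atype b r x y = atype b r y x.
Proof. by move=> hb hr x y; rewrite /atype hb hr. Qed.

Lemma Gat_sym x y : Gat x y = Gat y x.
Proof. exact: atype_sym gblack_sym gred_sym x y. Qed.

Lemma gblack_rec x v : valid x -> valid v -> v.1 < x.1 -> gblack x v = (v \in recB (grec x)).
Proof.
move=> hx hv hl; rewrite /A.gblack hx hv /=.
have -> : (x.1 == v.1) = false by apply/negbTE; rewrite neq_ltn hl orbT.
have -> : (x \in recB (grec v)) = false.
  apply/negbTE/negP => hin.
  have hh : inrec x v by rewrite hin.
  have [h1 _] := rec_elems Hord hh.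
  nlia.
by rewrite orbF.
Qed.

Lemma gred_rec x v : valid x -> valid v -> v.1 < x.1 -> gred x v = (v \in recR (grec x)).
Proof.
move=> hx hv hl; rewrite /A.gred hx hv /=.
have -> : (x \in recR (grec v)) = false.
  apply/negbTE/negP => hin.
  have hh : inrec x v by rewrite hin orbT.
  have [h1 _] := rec_elems Hord hh.
  nlia.
by rewrite orbF.
Qed.

Lemma Gat_none x v : ~~ ((x.1 == v.1) && ((x.2.+1 == v.2) || (v.2.+1 == x.2))) ->
  ~~ inrec v x -> ~~ inrec x v -> Gat x v = ANone.
Proof.
move=> h1 h2 h3; rewrite /atype /A.gblack /A.gred.
move: h2 h3; rewrite !negb_or => /andP [/negbTE -> /negbTE ->] /andP [/negbTE -> /negbTE ->].
by rewrite (negbTE h1) !andbF.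
Qed.

Lemma even_nc a b : ~~ odd a -> ~~ odd b -> ~~ ((a.+1 == b) || (b.+1 == a)).
Proof.
move=> ha hb; apply/negP => /orP [/eqP e|/eqP e].
- by move: hb; rewrite -e /= ha.
- by move: ha; rewrite -e /= hb.
Qed.

Section WithH.
Variable H : trigraph.
Hypothesis Hch : chordal H.
Hypothesis Hcl : clique_num_le H t.+1.
Hypothesis Htf : real_triangle_free H.
Variable X : vert -> Prop.

Local Notation adj := (@htotal H).
Local Notation Hat := (atype (@tblack H) (@tred H)).
Local Notation Q := (Q ord t X).
Implicit Types (S K : {set H}).

Lemma Hat_sym a b : Hat a b = Hat b a.
Proof. exact: atype_sym (@tblack_sym H) (@tred_sym H) a b. Qed.

Lemma Hat_none a b : ~~ adj a b -> Hat a b = ANone.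
Proof. by rewrite /htotal negb_or => /andP [h1 h2]; rewrite /atype (negbTE h1) (negbTE h2). Qed.

Definition attach S K (s : H) := [set k in K | [exists s', conn S s s' && adj s' k]].

Lemma attach_conn S K a b : conn S a b -> attach S K a = attach S K b.
Proof.
move=> hab; apply/setP => k; rewrite !inE; congr (_ && _).
apply/existsP/existsP => [[s' /andP [h1 h2]]|[s' /andP [h1 h2]]]; exists s'; rewrite h2 andbT.
- by apply: conn_trans h1; rewrite conn_sym.
- exact: conn_trans h1.
Qed.

Lemma attach_self S K s k : k \in K -> adj s k -> k \in attach S K s.
Proof. by move=> hk ha; rewrite inE hk /=; apply/existsP; exists s; rewrite conn_refl ha. Qed.

Lemma conn_restrict S S2 a b : S2 \subset S ->
  (forall x y, x \in S2 -> y \in S -> adj x y -> y \in S2) ->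
  a \in S2 -> conn S2 a b = conn S a b.
Proof.
move=> hsub hcl ha; apply/idP/idP => /connectP [p hp ->]; apply/connectP; exists p => //.
- apply: sub_path hp => x y /and3P [hx hy hxy]; apply/and3P; split => //.
  + exact: (subsetP hsub).
  + exact: (subsetP hsub).
- elim: p a ha hp => //= y p IH a ha /andP [/and3P [_ hy hay] hp].
  have hy2 : y \in S2 by apply: hcl hay.
  apply/andP; split; first by apply/and3P.
  exact: IH hp.
Qed.

Lemma attach_restrict S S2 K a : S2 \subset S ->
  (forall x y, x \in S2 -> y \in S -> adj x y -> y \in S2) ->
  a \in S2 -> attach S2 K a = attach S K a.
Proof.
move=> hsub hcl ha; apply/setP => k; rewrite !inE; congr (_ && _).
apply/existsP/existsP => [[s' /andP [h1 h2]]|[s' /andP [h1 h2]]]; exists s'; rewrite h2 andbT.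
- by rewrite -(conn_restrict _ hsub hcl ha).
- by rewrite (conn_restrict _ hsub hcl ha).
Qed.


Lemma Main n : forall S K (phi : H -> vert) (w : vert),
  #|S| <= n ->
  (forall k1 k2, k1 \in K -> k2 \in K -> k1 != k2 -> adj k1 k2) ->
  [disjoint S & K] ->
  (forall s y, s \in S -> adj s y -> (y \in S) || (y \in K)) ->
  (forall k, k \in K -> phi k \in Nup' w) ->
  (forall k1 k2, k1 \in K -> k2 \in K -> k1 != k2 ->
     Hat k1 k2 = Gat (phi k1) (phi k2) /\ phi k1 != phi k2) ->
  valid w -> Q w #|S| ->
  exists phi' : H -> vert, [/\
    forall y, y \notin S -> phi' y = phi y,
    forall s, s \in S -> [/\ X (phi' s), w.1 < (phi' s).1, anc w.1 (phi' s) = w,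
                            ~~ odd (phi' s).2 & valid (phi' s)],
    forall s y, s \in S -> (y \in S) || (y \in K) -> s != y ->
       Hat s y = Gat (phi' s) (phi' y) /\ phi' s != phi' y,
    forall s (v : vert), s \in S -> inrec v (phi' s) -> exists y, ((y \in S) || (y \in K)) /\ v = phi' y
  & forall s (v : vert), s \in S ->
       (inrec v (anc w.1.+1 (phi' s)) <-> exists k, k \in attach S K s /\ v = phi k)].
Proof.
elim: n => [|n IH] S K phi w hS hKc hdis hcl hN hKt hw hQ.
all: case: (set_0Vmem S) => [S0|[s0 hs0]].
all: try (exists phi; rewrite S0; split => //; move=> s; rewrite inE //).
  by move: hS; rewrite leqn0 cards_eq0 => /eqP S0; rewrite S0 inE in hs0.
have [h [hhS hs0h hcomp]] := complete_vertex Hch hKc hdis hs0.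
have hKS : forall k, k \in K -> k \notin S by move=> k hk; rewrite (disjointFl hdis hk).
have hSK : forall y, y \in S -> y \notin K by move=> y hy; apply/negP => /hKS; rewrite hy.
pose A := [set k in K | adj h k].
have hA : attach S K h = A.
  apply/setP => k; rewrite !inE; apply/andP/andP => [[hk /existsP [s' /andP [h1 h2]]]|[hk hhk]].
  - split => //; apply: (hcomp k s' hk) h2; exact: conn_trans h1.
  - split => //; apply/existsP; exists h; by rewrite conn_refl.
have hAK : forall k, k \in A -> k \in K by move=> k; rewrite inE => /andP [].
have hhA : h \notin A by apply/negP => /hAK; rewrite (negbTE (hSK _ hhS)).
have hinjK : forall k1 k2, k1 \in K -> k2 \in K -> phi k1 = phi k2 -> k1 = k2.
  move=> k1 k2 h1 h2 e; apply/eqP/negPn/negP => hne.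
  by have [_] := hKt k1 k2 h1 h2 hne; rewrite e eqxx.
have hAcard : #|A| <= t.
  have := Hcl (S := h |: A).
  rewrite cardsU1 hhA add1n ltnS; apply => a b; rewrite !inE.
  move=> /orP [/eqP ->|/andP [ha hha]] /orP [/eqP ->|/andP [hb hhb]] hab.
  - by rewrite eqxx in hab.
  - exact: hhb.
  - by rewrite adj_sym.
  - exact: hKc.
pose AB := [set k in A | tblack h k].
pose AR := [set k in A | tred h k].
pose sB := [seq phi k | k <- enum AB].
pose sR := [seq phi k | k <- enum AR].
have hABA : forall k, k \in AB -> k \in A by move=> k; rewrite inE => /andP [].
have hARA : forall k, k \in AR -> k \in A by move=> k; rewrite inE => /andP [].
have memsB : forall k, k \in K -> (phi k \in sB) = (k \in AB).
  move=> k hk; apply/mapP/idP => [[k' hk' e]|hk']; last by exists k; rewrite ?mem_enum.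
  rewrite mem_enum in hk'; rewrite (hinjK _ _ hk _ e) //; exact/hAK/hABA.
have memsR : forall k, k \in K -> (phi k \in sR) = (k \in AR).
  move=> k hk; apply/mapP/idP => [[k' hk' e]|hk']; last by exists k; rewrite ?mem_enum.
  rewrite mem_enum in hk'; rewrite (hinjK _ _ hk _ e) //; exact/hAK/hARA.
have sBP : forall v, v \in sB -> exists2 k, k \in AB & v = phi k.
  by move=> v /mapP [k hk ->]; exists k; rewrite // -mem_enum.
have sRP : forall v, v \in sR -> exists2 k, k \in AR & v = phi k.
  by move=> v /mapP [k hk ->]; exists k; rewrite // -mem_enum.
have hAsBR : forall v, (v \in sB) || (v \in sR) <-> exists k, k \in A /\ v = phi k.
  move=> v; split.
  - by case/orP => [/sBP [k hk ->]|/sRP [k hk ->]]; exists k; split => //; [apply: hABA | apply: hARA].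
  - move=> [k [hk ->]]; rewrite memsB ?memsR ?hAK //.
    move: hk; rewrite !inE => /andP [hkK]; rewrite /htotal => /orP [->|->]; by rewrite hkK ?orbT.
have hdisj : forall v, v \in sB -> v \notin sR.
  move=> v /sBP [k hk ->]; rewrite memsR ?hAK ?hABA //.
  move: hk; rewrite !inE => /andP [_ hb]; apply/negP => /andP [_ hr].
  by move: (tdisj hb); rewrite hr.
have hsize : size sB + size sR <= t.
  rewrite !size_map -!cardE.
  apply: leq_trans hAcard.
  have hI : AB :&: AR = set0.
    apply/setP => k; rewrite !inE; apply/negP => /andP [/andP [_ hb] /andP [_ hr]].
    by move: (tdisj hb); rewrite hr.
  have := cardsU AB AR; rewrite hI cards0 subn0 => <-.
  by apply: subset_leq_card; apply/subsetP => k; rewrite inE => /orP [/hABA|/hARA].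
have hred : forall a b, a \in sB -> b \in sB -> a != b -> gred a b.
  move=> a b /sBP [k1 hk1 ->] /sBP [k2 hk2 ->] hne.
  have hk12 : k1 != k2 by apply: contraNneq hne => ->.
  have hK1 := hAK _ (hABA _ hk1); have hK2 := hAK _ (hABA _ hk2).
  have [e _] := hKt k1 k2 hK1 hK2 hk12.
  move: hk1 hk2; rewrite !inE => /andP [_ hb1] /andP [_ hb2].
  have hadj := hKc k1 k2 hK1 hK2 hk12.
  have hnb : ~~ tblack k1 k2.
    apply/negP => hb; apply: (Htf (x := k1) (y := h) (z := k2)); split => //.
    by rewrite tblack_sym.
  move: e; rewrite /atype (negbTE hnb).
  move: hadj; rewrite /htotal (negbTE hnb) /= => ->.
  by case: (gblack _ _) => //; case: (gred _ _).
have hcw : carries ord t sB sR w.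
  split => // v; rewrite mem_cat => /orP [/sBP [k hk ->]|/sRP [k hk ->]]; apply: hN.
  - exact/hAK/hABA.
  - exact/hAK/hARA.
pose c := cpath ord t sB sR w.
have hc : downward_path ord t w c := cpath_down Hord hdisj hsize hred hcw.
have hSpos : 0 < #|S| by apply/card_gt0P; exists s0.
have hQ' : Q w (#|S|.-1).+1 by rewrite prednK.
have [n0 [hn0 hXx hmin hQx]] := first_hit hc hQ'.
set x := c n0.
have hxc : carries ord t sB sR x := cpath_carries Hord hdisj hsize hred n0 hcw.
have hxstep : x = cstep ord t sB sR (c n0.-1).
  by rewrite /x /c /cpath; case: (n0) hn0 => [|n0'] //= _.
have [hxch hxev hxB hxR _] := cstep_spec Hord hdisj hsize hred (cpath_carries Hord hdisj hsize hred n0.-1 hcw).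
rewrite -/(cpath ord t sB sR w n0.-1) -/c -hxstep in hxch hxev hxB hxR.
have hxv : valid x by case: hxc.
have hx1 : x.1 = w.1 + n0 := path_layer hc n0.
have hxanc : anc w.1 x = w by rewrite -[in LHS](addn0 w.1) (path_anc hc (n := 0)) //.
have hc1anc : anc w.1.+1 x = c 1 by rewrite -addn1 (path_anc hc (n := 1)).
have [_ _ hc1B hc1R _] := cstep_spec Hord hdisj hsize hred hcw.
have hc1 : c 1 = cstep ord t sB sR w by [].
rewrite -hc1 in hc1B hc1R.
have hinrec_x : forall v, inrec v x <-> exists k, k \in A /\ v = phi k.
  by move=> v; rewrite hxB hxR; apply: hAsBR.
have hinrec_c1 : forall v, inrec v (c 1) <-> exists k, k \in A /\ v = phi k.
  by move=> v; rewrite hc1B hc1R; apply: hAsBR.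
have hKl : forall k, k \in K -> (phi k).1 <= w.1 /\ valid (phi k).
  by move=> k hk; apply: Nup_elems (hN k hk).
have hxk : forall k, k \in K -> Hat h k = Gat x (phi k) /\ x != phi k.
  move=> k hk; have [hl hv] := hKl k hk.
  have hlt : (phi k).1 < x.1 by nlia.
  split; last by apply/negP => /eqP e; rewrite e in hlt; rewrite ltnn in hlt.
  rewrite /atype gblack_rec // gred_rec // hxB hxR memsB // memsR //.
  rewrite !inE hk /htotal.
  case hb: (tblack h k) => //=; case hr: (tred h k) => //=.
pose S1 := [set s in S | (s != h) && (attach S K s == A)].
pose S2 := [set s in S | attach S K s != A].
pose K1 := h |: A.
pose phi1 := fun y => if y == h then x else phi y.
have hS1 : forall s, (s \in S1) = [&& s \in S, s != h & attach S K s == A].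
  by move=> s; rewrite inE.
have hS2 : forall s, (s \in S2) = (s \in S) && (attach S K s != A).
  by move=> s; rewrite inE.
have hK1 : forall k, (k \in K1) = (k == h) || (k \in A) by move=> k; rewrite !inE.
have hSsplit : forall s, s \in S -> [\/ s = h, s \in S1 | s \in S2].
  move=> s hs; case: (eqVneq s h) => [->|hsh]; first by constructor 1.
  by case e: (attach S K s == A); [constructor 2; rewrite hS1 hs hsh e | constructor 3; rewrite hS2 hs e].
have hhS1 : h \notin S1 by rewrite hS1 eqxx andbF.
have hhS2 : h \notin S2 by rewrite hS2 hA eqxx andbF.
have hS12 : forall s, s \in S1 -> s \notin S2 by move=> s; rewrite hS1 hS2 => /and3P [_ _ ->]; rewrite andbF.
have hattach_edge : forall a b, a \in S -> b \in S -> adj a b -> attach S K a = attach S K b.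
  by move=> a b ha hb hab; apply: attach_conn; apply: conn_edge.
have hS1S : forall s, s \in S1 -> s \in S by move=> s; rewrite hS1 => /andP [].
have hS2S : forall s, s \in S2 -> s \in S by move=> s; rewrite hS2 => /andP [].
have hS1card : #|S1| <= n.
  have : #|S1| < #|S|.
    apply: proper_card; rewrite properE; apply/andP; split.
    - by apply/subsetP => s /hS1S.
    - by apply/subsetPn; exists h.
  nlia.
have hK1c : forall k1 k2, k1 \in K1 -> k2 \in K1 -> k1 != k2 -> adj k1 k2.
  move=> k1 k2; rewrite !hK1 => /orP [/eqP ->|h1] /orP [/eqP ->|h2] hne.
  - by rewrite eqxx in hne.
  - by move: h2; rewrite inE => /andP [].
  - by rewrite adj_sym; move: h1; rewrite inE => /andP [].
  - by apply: hKc => //; apply: hAK.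
have hdis1 : [disjoint S1 & K1].
  apply/pred0P => s /=; apply/negP => /andP [hs]; rewrite hK1 => /orP [/eqP e|hk].
  - by rewrite e (negbTE hhS1) in hs.
  - by move: (hKS _ (hAK _ hk)); rewrite hS1S.
have hcl1 : forall s y, s \in S1 -> adj s y -> (y \in S1) || (y \in K1).
  move=> s y hs hsy; have hsS := hS1S _ hs.
  move: (hs); rewrite hS1 => /and3P [_ _ /eqP hsA].
  case/orP: (hcl s y hsS hsy) => hy.
  - case: (eqVneq y h) => [->|hyh]; first by rewrite hK1 eqxx orbT.
    by rewrite hS1 hy hyh -(hattach_edge _ _ hsS hy hsy) hsA eqxx.
  - by rewrite hK1 -hsA (attach_self _ hy hsy) !orbT.
have hN1 : forall k, k \in K1 -> phi1 k \in Nup' x.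
  move=> k; rewrite hK1 /phi1 => /orP [/eqP ->|hk]; first by rewrite eqxx Nup_self.
  have hkh : k != h by apply: contraNneq hhA => <-.
  rewrite (negbTE hkh); apply: hxc.2; rewrite mem_cat.
  by apply/hAsBR; exists k.
have hKt1 : forall k1 k2, k1 \in K1 -> k2 \in K1 -> k1 != k2 ->
     Hat k1 k2 = Gat (phi1 k1) (phi1 k2) /\ phi1 k1 != phi1 k2.
  move=> k1 k2; rewrite !hK1 /phi1 => /orP [/eqP ->|h1] /orP [/eqP ->|h2] hne.
  - by rewrite eqxx in hne.
  - have hk2h : k2 != h by apply: contraNneq hhA => <-.
    by rewrite eqxx (negbTE hk2h); apply: hxk; apply: hAK.
  - have hk1h : k1 != h by apply: contraNneq hhA => <-.
    rewrite eqxx (negbTE hk1h) Hat_sym Gat_sym eq_sym; apply: hxk; exact: hAK.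
  - have hk1h : k1 != h by apply: contraNneq hhA => <-.
    have hk2h : k2 != h by apply: contraNneq hhA => <-.
    by rewrite (negbTE hk1h) (negbTE hk2h); apply: hKt => //; apply: hAK.
have hQ1 : Q x #|S1|.
  apply: Q_le hQx; have : #|S1| < #|S|.
    apply: proper_card; rewrite properE; apply/andP; split.
    - by apply/subsetP => s /hS1S.
    - by apply/subsetPn; exists h.
  nlia.
have [phi1' [P0 P1 P2 P3 P4]] := IH S1 K1 phi1 x hS1card hK1c hdis1 hcl1 hN1 hKt1 hxv hQ1.
have phi1'K : forall k, k \in K -> phi1' k = phi k.
  move=> k hk; rewrite P0; last by apply/negP => /hS1S; rewrite (negbTE (hKS _ hk)).
  rewrite /phi1; case: eqP => // e; by move: (hKS _ hk); rewrite e hhS.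
have phi1'h : phi1' h = x by rewrite P0 // /phi1 eqxx.
have hS2lt : #|S2| < #|S|.
  apply: proper_card; rewrite properE; apply/andP; split.
  - by apply/subsetP => s /hS2S.
  - by apply/subsetPn; exists h.
have hS2card : #|S2| <= n by nlia.
have hdis2 : [disjoint S2 & K].
  apply/pred0P => s /=; apply/negP => /andP [hs hk].
  by move: (hKS _ hk); rewrite hS2S.
have hcl2' : forall a y, a \in S2 -> y \in S -> adj a y -> y \in S2.
  move=> a y ha hy hay; move: (ha); rewrite hS2 => /andP [haS haA].
  by rewrite hS2 hy -(hattach_edge _ _ haS hy hay).
have hcl2 : forall s y, s \in S2 -> adj s y -> (y \in S2) || (y \in K).
  move=> s y hs hsy; case/orP: (hcl s y (hS2S _ hs) hsy) => hy.
  - by rewrite (hcl2' s y hs hy hsy).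
  - by rewrite hy orbT.
have hN2 : forall k, k \in K -> phi1' k \in Nup' w.
  by move=> k hk; rewrite phi1'K //; apply: hN.
have hKt2 : forall k1 k2, k1 \in K -> k2 \in K -> k1 != k2 ->
     Hat k1 k2 = Gat (phi1' k1) (phi1' k2) /\ phi1' k1 != phi1' k2.
  by move=> k1 k2 h1 h2 hne; rewrite !phi1'K //; apply: hKt.
have hQ2 : Q w #|S2| by apply: Q_le hQ; nlia.
have [phi' [R0 R1 R2 R3 R4]] := IH S2 K phi1' w hS2card hKc hdis2 hcl2 hN2 hKt2 hw hQ2.
exists phi'.
have phi'K : forall k, k \in K -> phi' k = phi k.
  by move=> k hk; rewrite R0 ?phi1'K //; apply/negP => /hS2S; rewrite (negbTE (hKS _ hk)).
have phi'h : phi' h = x by rewrite R0 // phi1'h.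
have phi'S1 : forall s, s \in S1 -> phi' s = phi1' s by move=> s hs; rewrite R0 // hS12.
have hattach2 : forall s, s \in S2 -> attach S2 K s = attach S K s.
  move=> s hs; apply: attach_restrict => //.
  by apply/subsetP => y /hS2S.
have hattachK : forall s k, k \in attach S K s -> k \in K by move=> s' k; rewrite inE => /andP [].
have hS1A : forall s, s \in S1 -> attach S K s = A by move=> s'; rewrite hS1 => /and3P [_ _ /eqP].
have hS2A : forall s, s \in S2 -> attach S K s != A by move=> s'; rewrite hS2 => /andP [].
have hxw : w.1 < x.1 by nlia.
have reg1 : forall s, (s = h \/ s \in S1) ->
    [/\ X (phi' s), w.1 < (phi' s).1, anc w.1 (phi' s) = w, anc w.1.+1 (phi' s) = c 1
      & ~~ odd (phi' s).2 /\ valid (phi' s)].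
  move=> s' [->|hs]; first by rewrite phi'h.
  have [h1 h2 h3 h4 h5] := P1 s' hs; rewrite phi'S1 //.
  split => //; first nlia.
  - by rewrite -(@anc_anc ord t _ x.1) ?h3 //; nlia.
  - by rewrite -(@anc_anc ord t _ x.1) ?h3 //; nlia.
have reg2 : forall s, s \in S2 -> anc w.1.+1 (phi' s) != c 1.
  move=> s' hs; apply/negP => /eqP e.
  move: (hS2A _ hs) => /negP; apply; apply/eqP/setP => k.
  have hR := R4 s' (phi k) hs; rewrite e hattach2 // in hR.
  apply/idP/idP => hk.
  - have hkK := hattachK _ _ hk.
    have [k' [hk' e']] : exists k', k' \in A /\ phi k = phi k'.
      by apply/hinrec_c1/hR; exists k; rewrite phi1'K.
    by rewrite (hinjK _ _ hkK (hAK _ hk') e').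
  - have [k' [hk' e']] := proj1 hR (proj2 (hinrec_c1 (phi k)) (ex_intro _ k (conj hk erefl))).
    rewrite phi1'K ?(hattachK _ _ hk') // in e'.
    by rewrite (hinjK _ _ (hAK _ hk) (hattachK _ _ hk') e').
have rec1 : forall s v, (s = h \/ s \in S1) -> inrec v (phi' s) ->
    exists y, [/\ y = h \/ y \in S1 \/ y \in A & v = phi' y].
  move=> s' v [->|hs] hv.
  - rewrite phi'h in hv; have [k [hk ->]] := proj1 (hinrec_x v) hv.
    by exists k; split; [right; right | rewrite phi'K ?hAK].
  - rewrite phi'S1 // in hv; have [y [hy ->]] := P3 s' v hs hv.
    case/orP: hy => hy; first by exists y; split; [right; left | rewrite phi'S1].
    move: hy; rewrite hK1 => /orP [/eqP ->|hy]; first by exists h; split; [left | rewrite phi1'h phi'h].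
    exists y; split; [right; right | ] => //.
    have hyh : y != h by apply: contraNneq hhA => <-.
    by rewrite phi'K ?hAK // P0 /phi1 ?(negbTE hyh) //; apply/negP => /hS1S; rewrite (negbTE (hKS _ (hAK _ hy))).
have cross : forall s1 s2, (s1 = h \/ s1 \in S1) -> s2 \in S2 ->
    [/\ Hat s1 s2 = ANone, Gat (phi' s1) (phi' s2) = ANone & phi' s1 != phi' s2].
  move=> s1 s2 hs1 hs2.
  have [_ hl1 _ ha1 [he1 hv1]] := reg1 s1 hs1.
  have [_ hl2 _ he2 hv2] := R1 s2 hs2.
  have hne := reg2 s2 hs2.
  have hs1S : s1 \in S by case: hs1 => [->|/hS1S].
  have hA1 : attach S K s1 = A by case: hs1 => [->|/hS1A].
  have ha2 : anc w.1.+1 (phi' s2) != c 1 := hne.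
  split.
  - apply: Hat_none; apply/negP => hadj.
    move: (hS2A _ hs2); rewrite -(hattach_edge _ _ hs1S (hS2S _ hs2) hadj) hA1 eqxx //.
  - apply: Gat_none.
    + by rewrite negb_and even_nc ?orbT.
    + apply/negP => hin; have [y [hy e]] := rec1 s1 _ hs1 hin.
      case: hy => [hy|[hy|hy]].
      * by move: ha2; rewrite e hy phi'h hc1anc eqxx.
      * by have [_ _ _ ha _] := reg1 y (or_intror hy); move: ha2; rewrite e ha eqxx.
      * by have [hl _] := hKl y (hAK _ hy); move: hl2; rewrite e phi'K ?hAK //; nlia.
    + apply/negP => hin; have [y [hy e]] := R3 s2 _ hs2 hin.
      case/orP: hy => hy.
      * by move: (reg2 y hy); rewrite -e ha1 eqxx.
      * by have [hl _] := hKl y hy; move: hl1; rewrite e phi'K //; nlia.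
  - by apply/negP => /eqP e; move: ha2; rewrite -e ha1 eqxx.
have Kside : forall s k, s \in S -> k \in K -> Hat s k = Gat (phi' s) (phi' k) /\ phi' s != phi' k.
  move=> s' k hs hk.
  case: (hSsplit s' hs) => [e1|hs1|hs2].
  - by rewrite e1 phi'h phi'K //; apply: hxk.
  - rewrite phi'S1 // phi'K //.
    case hkA: (k \in A).
    + have hkh : k != h by apply: contraNneq hhA => <-.
      have := P2 s' k hs1; rewrite hK1 hkA !orbT => /(_ isT).
      have hsk : s' != k by apply: contraNneq (hKS _ hk) => <-; exact: hS1S.
      move=> /(_ hsk); rewrite (P0 k) /phi1 ?(negbTE hkh) //.
      by apply/negP => /hS1S; rewrite (negbTE (hKS _ hk)).
    + have [hX hl1 _ ha1 [he1 hv1]] := reg1 s' (or_intror hs1).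
      rewrite phi'S1 // in hl1 ha1 he1 hv1.
      have [hl hv] := hKl k hk.
      split; last by apply/negP => /eqP e; move: hl1; rewrite e; nlia.
      rewrite Hat_none; last first.
        apply/negP => hadj; move: (attach_self S hk hadj); rewrite hS1A // hkA //.
      symmetry; apply: Gat_none.
      * rewrite negb_and; apply/orP; left; apply/negP => /eqP e.
        have e' : (phi1' s').1 = (phi k).1 :> nat := e.
        nlia.
      * apply/negP => hin; rewrite -phi'S1 // in hin.
        have [y [hy e]] := rec1 s' _ (or_intror hs1) hin.
        case: hy => [hy|[hy|hy]].
        -- by move: hxw; rewrite -phi'h -hy -e; nlia.
        -- by have [_ hly _ _ _] := reg1 y (or_intror hy); move: hly; rewrite -e; nlia.
        -- by rewrite phi'K ?hAK // in e; rewrite (hinjK _ _ hk (hAK _ hy) e) hy in hkA.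
      * apply/negP => hin; have [hh _] := rec_elems Hord hin; nlia.
  - apply: R2 => //; first by rewrite hk orbT.
    by apply: contraNneq (hKS _ hk) => <-; exact: hS2S.
split.
- move=> y hy; rewrite R0; last by apply/negP => /hS2S; rewrite (negbTE hy).
  rewrite P0; last by apply/negP => /hS1S; rewrite (negbTE hy).
  by rewrite /phi1; case: eqP => // e; rewrite e hhS in hy.
- move=> s' hs; case: (hSsplit s' hs) => [e1|hs1|hs2].
  + by have [? ? ? _ []] := reg1 s' (or_introl e1).
  + by have [? ? ? _ []] := reg1 s' (or_intror hs1).
  + exact: R1.
- move=> s' y hs hy hsy.
  case/orP: hy => hy; last exact: Kside.
  case: (hSsplit s' hs) => [e1|hs1|hs2]; case: (hSsplit y hy) => [e2|hy1|hy2].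
  + by rewrite e1 e2 eqxx in hsy.
  + rewrite e1 phi'h phi'S1 // Hat_sym Gat_sym eq_sym.
    have := P2 y h hy1; rewrite hK1 eqxx /= orbT => /(_ isT); rewrite phi1'h; apply.
    by rewrite eq_sym -e1.
  + by have [-> -> ->] := cross s' y (or_introl e1) hy2.
  + rewrite e2 phi'h phi'S1 //.
    have := P2 s' h hs1; rewrite hK1 eqxx /= orbT => /(_ isT); rewrite phi1'h; apply.
    by rewrite -e2.
  + by rewrite !phi'S1 //; apply: P2 => //; rewrite hy1.
  + by have [-> -> ->] := cross s' y (or_intror hs1) hy2.
  + have [h1 h2 h3] := cross y s' (or_introl e2) hs2.
    by rewrite Hat_sym Gat_sym eq_sym h1 h2 h3.
  + have [h1 h2 h3] := cross y s' (or_intror hy1) hs2.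
    by rewrite Hat_sym Gat_sym eq_sym h1 h2 h3.
  + by apply: R2 => //; rewrite hy2.
- move=> s' v hs hv; case: (hSsplit s' hs) => [e1|hs1|hs2].
  + have [y [hy ->]] := rec1 s' v (or_introl e1) hv; exists y; split => //.
    case: hy => [->|[/hS1S ->|/hAK ->]] //; by rewrite ?hhS ?orbT.
  + have [y [hy ->]] := rec1 s' v (or_intror hs1) hv; exists y; split => //.
    case: hy => [->|[/hS1S ->|/hAK ->]] //; by rewrite ?hhS ?orbT.
  + have [y [hy ->]] := R3 s' v hs2 hv; exists y; split => //.
    by case/orP: hy => [/hS2S ->|->]; rewrite ?orbT.
- move=> s' v hs; case: (hSsplit s' hs) => [e1|hs1|hs2].
  + have [_ _ _ -> _] := reg1 s' (or_introl e1).
    by rewrite e1 hA; apply: hinrec_c1.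
  + have [_ _ _ -> _] := reg1 s' (or_intror hs1).
    by rewrite hS1A //; apply: hinrec_c1.
  + rewrite -hattach2 //; split.
    * move=> hin; have [k [hk e]] := proj1 (R4 s' v hs2) hin.
      exists k; split => //; rewrite e phi1'K //; by move: hk; rewrite inE => /andP [].
    * move=> [k [hk e]]; apply/(R4 s' v hs2); exists k; split => //.
      by rewrite phi1'K //; move: hk; rewrite inE => /andP [].
Qed.

End WithH.
End Main.

End M.
Import M.


Ltac clean_nat := repeat match goal with
  | h : ?T |- _ => lazymatch T with
      | is_true (leq _ _) => fail
      | @eq nat _ _ => fail
      | ~ (@eq nat _ _) => fail
      | _ => lazymatch type of T with Prop => clear h | _ => fail end end end.
Ltac nlia := clean_nat; lia.

Lemma drop0_size (s : seq nat) : uniq s -> size s <= size [seq j <- s | 0 < j] + 1.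
Proof.
move=> hu.
rewrite -(count_predC (fun j => 0 < j) s) -size_filter leq_add2l.
rewrite -size_filter; apply: (leq_trans (n := size [:: 0])) => //.
apply: uniq_leq_size; first by rewrite filter_uniq.
move=> j; rewrite mem_filter => /andP [hj _]; move: hj; rewrite /= lt0n negbK => /eqP ->.
by rewrite inE.
Qed.

Theorem lemma4p11 (t : nat) (ord : order_fn) :
  0 < t -> valid_order ord ->
  forall H : trigraph,
    chordal H -> clique_num_le H t.+1 -> real_triangle_free H ->
  forall X : vert -> Prop,
    (forall v, X v -> Gvert ord t v) -> Hfree_in ord t H X ->
  forall u : vert, Gvert ord t u ->
  exists p : nat -> vert, downward_path ord t u p /\
    (forall s : seq nat, uniq s -> (forall n, n \in s -> X (p n)) ->
       size s <= #|H| - 1).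
Proof.
move=> ht Hord H Hch Hcl Htf X hXv Hfree u hu.
apply: NNPP => hno.
have hall : forall p, downward_path ord t u p ->
    exists s : seq nat, [/\ uniq s, forall n, n \in s -> X (p n) & #|H| <= size s].
  move=> p hp; apply: NNPP => hne; apply: hno; exists p; split => // s hs hX.
  rewrite leqNgt; apply/negP => hlt; apply: hne; exists s; split => //.
  have hlt' : #|H| - 1 < size s := hlt.
  nlia.
have GatE : forall a b, atype (Gblack ord t) (Gred ord t) a b = atype (gblack ord t) (gred ord t) a b.
  by move=> a b; rewrite /atype GblackE GredE.
case: (posnP #|H|) => [H0|Hpos].
  apply: Hfree; exists (fun _ => u); split.
  - by move=> x; move: (card0_eq H0 x); rewrite inE.
  - by move=> x; move: (card0_eq H0 x); rewrite inE.
  - by move=> x; move: (card0_eq H0 x); rewrite inE.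
have [h0 _] : exists i : H, i \in H by apply/card_gt0P.
case: (classic (X u)) => hXu.
- pose S := [set~ h0]; pose K := [set h0].
  have hS : #|S| = #|H| - 1 by rewrite cardsC1; nlia.
  have hKc : forall k1 k2, k1 \in K -> k2 \in K -> k1 != k2 -> htotal k1 k2.
    by move=> k1 k2; rewrite !inE => /eqP -> /eqP ->; rewrite eqxx.
  have hdis : [disjoint S & K] by rewrite disjoint_sym disjoints1 !inE negbK.
  have hcl : forall s y, s \in S -> htotal s y -> (y \in S) || (y \in K).
    by move=> s y _ _; rewrite !inE orNb.
  have hN : forall k, k \in K -> (fun _ : H => u) k \in Nup (layers ord t u.1) u.
    by move=> k _; apply: Nup_self.
  have hKt : forall k1 k2, k1 \in K -> k2 \in K -> k1 != k2 ->
      atype (@tblack H) (@tred H) k1 k2 = atype (gblack ord t) (gred ord t) ((fun _ : H => u) k1) ((fun _ : H => u) k2)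
      /\ (fun _ : H => u) k1 != (fun _ : H => u) k2.
    by move=> k1 k2; rewrite !inE => /eqP -> /eqP ->; rewrite eqxx.
  have hQ : Q ord t X u #|S|.
    move=> p hp; have [s [hu' hX hsz]] := hall p hp.
    exists [seq j <- s | 0 < j]; split.
    + by rewrite filter_uniq.
    + by move=> j; rewrite mem_filter => /andP [h1 h2]; split => //; apply: hX.
    + have := drop0_size hu'; rewrite hS; nlia.
  have [phi' [C0 C1 C2 C3 C4]] := @Main ord t Hord H Hch Hcl Htf X #|S| S K (fun _ => u) u
     (leqnn _) hKc hdis hcl hN hKt hu hQ.
  have phih0 : phi' h0 = u by rewrite C0 // !inE negbK.
  have hSK : forall y, (y \in S) || (y \in K) by move=> y; rewrite !inE orNb.
  have key : forall x y, x != y ->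
      atype (@tblack H) (@tred H) x y = atype (gblack ord t) (gred ord t) (phi' x) (phi' y) /\ phi' x != phi' y.
    move=> x y hxy.
    case hx: (x \in S); first exact: C2.
    have ex : x = h0 by move: hx; rewrite !inE => /negbFE/eqP.
    have hy : y \in S by rewrite !inE -ex eq_sym.
    have [e1 e2] := C2 y x hy (hSK x) (ltac:(by rewrite eq_sym)).
    split; last by rewrite eq_sym.
    by rewrite (atype_sym (@tblack_sym H) (@tred_sym H)) e1 Gat_sym.
  apply: Hfree; exists phi'; split.
  + move=> x y e; apply/eqP/negPn/negP => hxy.
    by have [_] := key x y hxy; rewrite e eqxx.
  + move=> x; case hx: (x \in S); first by have [] := C1 x hx.
    by move: hx; rewrite !inE => /negbFE/eqP ->; rewrite phih0.
  + by move=> x y hxy; rewrite GatE; have [] := key x y hxy.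
- pose S := [set: H]; pose K := (set0 : {set H}).
  have hKc : forall k1 k2, k1 \in K -> k2 \in K -> k1 != k2 -> htotal k1 k2.
    by move=> k1 k2; rewrite inE.
  have hdis : [disjoint S & K] by apply/pred0P => y; rewrite /= !inE.
  have hcl : forall s y, s \in S -> htotal s y -> (y \in S) || (y \in K).
    by move=> s y _ _; rewrite inE.
  have hN : forall k, k \in K -> (fun _ : H => u) k \in Nup (layers ord t u.1) u.
    by move=> k; rewrite inE.
  have hKt : forall k1 k2, k1 \in K -> k2 \in K -> k1 != k2 ->
      atype (@tblack H) (@tred H) k1 k2 = atype (gblack ord t) (gred ord t) ((fun _ : H => u) k1) ((fun _ : H => u) k2)
      /\ (fun _ : H => u) k1 != (fun _ : H => u) k2.
    by move=> k1 k2; rewrite inE.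
  have hQ : Q ord t X u #|S|.
    move=> p hp; have [s [hu' hX hsz]] := hall p hp.
    exists s; split => //; last by rewrite cardsT.
    move=> j hj; split; last exact: hX.
    rewrite lt0n; apply/negP => /eqP j0; apply: hXu; rewrite -hp.1 -j0; exact: hX.
  have [phi' [C0 C1 C2 C3 C4]] := @Main ord t Hord H Hch Hcl Htf X #|S| S K (fun _ => u) u
     (leqnn _) hKc hdis hcl hN hKt hu hQ.
  apply: Hfree; exists phi'; split.
  + move=> x y e; apply/eqP/negPn/negP => hxy.
    by have [_] := C2 x y (in_setT x) (ltac:(by rewrite in_setT)) hxy; rewrite e eqxx.
  + by move=> x; have [] := C1 x (in_setT x).
  + by move=> x y hxy; rewrite GatE; have [] := C2 x y (in_setT x) (ltac:(by rewrite in_setT)) hxy.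
Qed.
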